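(* Let $\mathbb{K}$ be an algebraically closed field of characteristic $0$, let $p\in\mathbb{K}[x,y]\setminus(\mathbb{K}[x]\cup\mathbb{K}[y])$ be irreducible, let $r\in\mathbb{K}[x,y]_p\setminus\langle p\rangle$, and let $f\in\mathbb{K}(x)$, $g\in\mathbb{K}(y)$, $q\in\mathbb{K}[x,y]_p$ satisfy $r+qp=f-g$. Assume $(\infty,\infty)$ lies on the curve associated with $p$ and let $\varphi\in\mathbb{K}\{\{x^{-1}\}\}$ satisfy $p(x,\varphi)=0$ and $\deg\varphi>0$. Let $b$ be such that $\mathrm{m}(\infty,f)\le b$. If $\deg r(x,\varphi)>b$, then $\mathrm{m}(\infty,g)=\deg r(x,\varphi)/\deg\varphi$; if $\deg r(x,\varphi)\le b$, then $\mathrm{m}(\infty,g)\le b/\deg\varphi$.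
   Context: $\mathbb{K}[x,y]_p$ is the set of $h\in\mathbb{K}(x,y)$ whose reduced denominator is not divisible by $p$; $\langle p\rangle=\{qp:q\in\mathbb{K}[x,y]_p\}$. The curve associated with $p$ is the zero set in $\mathbb{P}^1\times\mathbb{P}^1$ of the bi-homogenization $x_0^{\deg_x p}y_0^{\deg_y p}p(x_1/x_0,y_1/y_0)$. $\mathbb{K}\{\{x^{-1}\}\}$ is the field of Puiseux series in $x^{-1}$; the degree of a nonzero such series is the largest exponent of $x$ occurring in it. For $f\in\mathbb{K}(x)$, $\mathrm{m}(\infty,f)=\deg f_n-\deg f_d$ (numerator and denominator degrees); likewise $\mathrm{m}(\infty,g)=\deg g_n-\deg g_d$ for $g\in\mathbb{K}(y)$. *)

(* Defs.v *)
From HB Require Import structures.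
From mathcomp Require Import all_boot all_order all_algebra.
From mathcomp Require Import boolp classical_sets fsbigop.
Set Implicit Arguments.
Unset Strict Implicit.
Unset Printing Implicit Defensive.
Import Order.TTheory GRing.Theory Num.Theory.
Local Open Scope ring_scope.

(* Bivariate polynomials K[x,y] are {poly {poly K}}: the OUTER variable is y,
   the coefficients are polynomials in x.  An element a : {poly K} of K[x] is
   a%:P ; an element b : {poly K} of K[y] is b^:P.  K(x,y) is
   {fraction {poly {poly K}}}. *)

Notation "x %:F" := (@FracField.tofrac _ x) : ring_scope.

Section Defs.
Variable K : fieldType.
Local Notation P2 := {poly {poly K}}.
Local Notation F2 := {fraction P2}.

Definition pdeg (a : {poly K}) : int := (size a).-1%:Z.

(* m(oo, n/d) = deg n - deg d *)
Definition m_inf (n d : {poly K}) : int := pdeg n - pdeg d.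

Definition degy (p : P2) : nat := (size p).-1.
Definition degx (p : P2) : nat := \big[maxn/0%N]_(i < size p) (size p`_i).-1.

Definition dvd2 (a b : P2) : Prop := exists c : P2, b = c * a.

Definition irreducible2 (p : P2) : Prop :=
  p != 0 /\ ~~ (p \is a GRing.unit) /\
  forall a b : P2, p = a * b -> a \is a GRing.unit \/ b \is a GRing.unit.

Definition reduced2 (a b : P2) : Prop :=
  b != 0 /\ forall d : P2, dvd2 d a -> dvd2 d b -> d \is a GRing.unit.

(* K[x,y]_p : the reduced denominator of h is not divisible by p *)
Definition in_loc (p : P2) (h : F2) : Prop :=
  exists a b : P2, reduced2 a b /\ ~ dvd2 p b /\ h = a%:F / b%:F.

Definition in_ideal (p : P2) (h : F2) : Prop :=
  exists q : F2, in_loc p q /\ h = q * p%:F.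

(* bi-homogenization x0^dx y0^dy p(x1/x0, y1/y0) evaluated at (x0:x1),(y0:y1) *)
Definition bihom (p : P2) (x0 x1 y0 y1 : K) : K :=
  \sum_(i < size p) \sum_(j < (degx p).+1)
     (p`_i)`_j * (x1 ^+ j * x0 ^+ (degx p - j)) * (y1 ^+ i * y0 ^+ (degy p - i)).

(* ((x0:x1),(y0:y1)) in P^1 x P^1 lies on the curve associated with p *)
Definition on_curve (p : P2) (x0 x1 y0 y1 : K) : Prop :=
  (x0, x1) != (0, 0) /\ (y0, y1) != (0, 0) /\ bihom p x0 x1 y0 y1 = 0.

(* ---- Puiseux series in x^-1 ----
   A series is represented by its coefficient function e |-> coeff of x^e,
   e ranging over rat. *)
Definition pseries := rat -> K.

Definition is_puiseux (phi : pseries) : Prop :=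
  exists N : nat, (0 < N)%N /\ exists M : rat,
    forall e : rat, phi e != 0 -> denq (e * N%:R) = 1 /\ e <= M.

Definition ps0 : pseries := fun _ => 0.
Definition ps_add (phi psi : pseries) : pseries := fun e => phi e + psi e.
(* Cauchy product; the sum is finitely supported for Puiseux series *)
Definition ps_mul (phi psi : pseries) : pseries :=
  fun e => \big[+%R/0]_(e1 \in [set: rat]) (phi e1 * psi (e - e1)).
Definition ps_of_poly (a : {poly K}) : pseries :=
  fun e => if (denq e == 1) && (0 <= numq e) then a`_(absz (numq e)) else 0.
Definition ps1 : pseries := ps_of_poly 1.
Definition ps_pow (phi : pseries) (n : nat) : pseries := iter n (ps_mul phi) ps1.

Definition ps_eval (P : P2) (phi : pseries) : pseries :=
  \big[ps_add/ps0]_(i < size P) ps_mul (ps_of_poly P`_i) (ps_pow phi i).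

Definition ps_deg_is (phi : pseries) (d : rat) : Prop :=
  phi d != 0 /\ forall e : rat, phi e != 0 -> e <= d.

Definition frac_eval_is (h : F2) (phi s : pseries) : Prop :=
  is_puiseux s /\ exists a b : P2,
    ps_eval b phi <> ps0 /\ h = a%:F / b%:F /\ ps_mul s (ps_eval b phi) = ps_eval a phi.

End Defs.

(* Main.v *)
Require Import Defs.
From HB Require Import structures.
From mathcomp Require Import all_boot all_order all_algebra.
From mathcomp Require Import boolp classical_sets functions cardinality fsbigop.
From mathcomp Require Import ring lra zify.
Import Order.TTheory GRing.Theory Num.Theory.
Local Open Scope ring_scope.
Set Implicit Arguments.
Unset Strict Implicit.
Unset Printing Implicit Defensive.

Definition ong (N : nat) (e : rat) : bool := e * N%:R \is a Num.int.

Lemma ongM N k e : ong N e -> ong (N * k) e.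
Proof. by rewrite /ong natrM mulrA => h; apply: rpredM => //; apply: rpred_nat. Qed.

Lemma ongD N a b : ong N a -> ong N b -> ong N (a + b).
Proof. by rewrite /ong mulrDl; apply: rpredD. Qed.

Lemma ongN N a : ong N a -> ong N (- a).
Proof. by rewrite /ong mulNr rpredN. Qed.

Definition win N (lo hi : rat) : set rat := [set x : rat | lo <= x /\ x <= hi /\ ong N x]%classic.

Lemma win_fin N lo hi : (0 < N)%N -> finite_set (win N lo hi).
Proof.
move=> N0.
set B := Num.bound (`|lo * N%:R| + `|hi * N%:R|).
apply: (sub_finite_set _ (finite_seq
  [seq ((i%:Z - B%:Z)%:~R / N%:R : rat) | i <- iota 0 (B + B).+1])).
move=> x [hlo [hhi /intrP [k hk]]].
have hB : `|lo * N%:R| + `|hi * N%:R| < B%:R.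
  by apply: archi_boundP; rewrite addr_ge0.
have Np : (0 : rat) < N%:R by rewrite ltr0n.
have h1 : lo * N%:R <= k%:~R by rewrite -hk ler_pM2r.
have h2 : k%:~R <= hi * N%:R by rewrite -hk ler_pM2r.
have h3 := lerNnormlW (lexx `|lo * N%:R|).
have h4 := ler_norm (hi * N%:R).
have h5 := normr_ge0 (hi * N%:R).
have h6 := normr_ge0 (lo * N%:R).
have hBz : (B%:R : rat) = (B%:Z)%:~R by rewrite pmulrn.
have k1 : (k%:~R : rat) < (B%:Z)%:~R by rewrite -hBz; lra.
have k2 : ((- B%:Z)%:~R : rat) < k%:~R by rewrite mulrNz -hBz; lra.
rewrite ltr_int in k1; rewrite ltr_int in k2.
suff : x \in [seq ((i%:Z - B%:Z)%:~R / N%:R : rat) | i <- iota 0 (B + B).+1] by [].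
apply/mapP; exists (absz (k + B%:Z)).
  rewrite mem_iota; apply/andP; split; first by [].
  lia.
have -> : ((absz (k + B%:Z))%:Z - B%:Z) = k by lia.
by rewrite -hk mulfK // gt_eqF.
Qed.
Section Conv.
Variable K : fieldType.
Local Notation ps := (pseries K).

Lemma fsumT_sub (F : rat -> K) (W : set rat) :
  (forall x, F x != 0 -> W x) ->
  \sum_(x \in [set: rat]) F x = \sum_(x \in W) F x.
Proof.
move=> H; rewrite (fsbig_widen W [set: rat] F) //.
by move=> x [_ Wx]; apply/eqP; apply: contraT => /H.
Qed.

Lemma fsumMr (a : K) (F : rat -> K) (P : set rat) :
  a * (\sum_(x \in P) F x) = \sum_(x \in P) a * F x.
Proof. exact: mulr_fsumr. Qed.

Lemma fsumMl (a : K) (F : rat -> K) (P : set rat) :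
  (\sum_(x \in P) F x) * a = \sum_(x \in P) F x * a.
Proof. exact: mulr_fsuml. Qed.

Lemma fsum_nz (F : rat -> K) (A : set rat) :
  \sum_(x \in A) F x != 0 -> exists x, A x /\ F x != 0.
Proof.
move=> H; have [//|H2] := pselect (exists x, A x /\ F x != 0).
move: H; rewrite fsbig1 ?eqxx // => x Ax.
by apply/eqP; apply: contraT => Fx; case: H2; exists x.
Qed.

Lemma fsum_exchT (D : rat -> rat -> K) (U V : set rat) :
  finite_set U -> finite_set V -> (forall a b, D a b != 0 -> U a /\ V b) ->
  \sum_(a \in [set: rat]) \sum_(b \in [set: rat]) D a b =
  \sum_(b \in [set: rat]) \sum_(a \in [set: rat]) D a b.
Proof.
move=> fU fV H.
transitivity (\sum_(a \in U) \sum_(b \in V) D a b).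
  rewrite (fsumT_sub (W := U)); last first.
    by move=> a /fsum_nz [b [_ /H []]].
  by apply: eq_fsbigr => a _; apply: fsumT_sub => b /H [].
rewrite exchange_fsbig //.
rewrite [RHS](fsumT_sub (W := V)); last first.
  by move=> b /fsum_nz [a [_ /H []]].
by apply: eq_fsbigr => b _; apply/esym/fsumT_sub => a /H [].
Qed.

Definition puis (phi : ps) N M :=
  (0 < N)%N /\ forall e, phi e != 0 -> ong N e /\ e <= M.

Lemma puisE phi : is_puiseux phi -> exists N M, puis phi N M.
Proof.
move=> [N [N0 [M H]]]; exists N, M; split=> // e /H [h1 h2]; split=> //.
by rewrite /ong Qint_def h1.
Qed.

Lemma puisI phi N M : puis phi N M -> is_puiseux phi.
Proof.
move=> [N0 H]; exists N; split=> //; exists M => e /H [h1 h2]; split=> //.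
by apply/eqP; rewrite -Qint_def.
Qed.

Lemma supp2_fin (phi psi : ps) e : is_puiseux phi -> is_puiseux psi ->
  finite_set [set x | phi x != 0 /\ psi (e - x) != 0]%classic.
Proof.
move=> /puisE [N1 [M1 [N10 H1]]] /puisE [N2 [M2 [N20 H2]]].
apply: (sub_finite_set _ (win_fin (e - M2) M1 N10)).
move=> x [/H1 [o1 l1] /H2 [o2 l2]]; split; first lra.
by split.
Qed.

Lemma ps_mulC (phi psi : ps) : ps_mul phi psi = ps_mul psi phi.
Proof.
apply/funext => e; rewrite /ps_mul (reindex_fsbigT (fun x => e - x)).
  by apply: eq_fsbigr => x _; rewrite subKr mulrC.
by exists (fun x => e - x) => x; rewrite subKr.
Qed.

Lemma ps_mulDr (phi psi chi : ps) : is_puiseux phi -> is_puiseux psi ->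
  is_puiseux chi ->
  ps_mul phi (ps_add psi chi) = ps_add (ps_mul phi psi) (ps_mul phi chi).
Proof.
move=> h1 h2 h3; apply/funext => e; rewrite /ps_mul /ps_add.
set W := ([set x | phi x != 0 /\ psi (e - x) != 0] `|`
          [set x | phi x != 0 /\ chi (e - x) != 0])%classic.
have fW : finite_set W by rewrite /W finite_setU; split; apply: supp2_fin.
rewrite (fsumT_sub (W := W)); last first.
  move=> x; have [->|p0] := eqVneq (phi x) 0; first by rewrite mul0r eqxx.
  have [a0|a0] := eqVneq (psi (e - x)) 0; first by rewrite a0 add0r mulf_eq0 negb_or => /andP [? ?]; rewrite /W; right.
  by move=> _; rewrite /W; left.
rewrite (fsumT_sub (W := W) (F := fun x => phi x * psi (e - x))); last first.
  by move=> x /=; rewrite mulf_eq0 negb_or => /andP [? ?]; rewrite /W; left.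
rewrite (fsumT_sub (W := W) (F := fun x => phi x * chi (e - x))); last first.
  by move=> x /=; rewrite mulf_eq0 negb_or => /andP [? ?]; right.
by rewrite -fsbig_split //; apply: eq_fsbigr => x _; rewrite mulrDr.
Qed.

Lemma ps_mulA (phi psi chi : ps) : is_puiseux phi -> is_puiseux psi ->
  is_puiseux chi ->
  ps_mul phi (ps_mul psi chi) = ps_mul (ps_mul phi psi) chi.
Proof.
move=> /puisE [N1 [M1 [N10 H1]]] /puisE [N2 [M2 [N20 H2]]].
move=> /puisE [N3 [M3 [N30 H3]]].
apply/funext => e; rewrite /ps_mul; cbv beta.
transitivity (\sum_(e2 \in [set: rat]) \sum_(e1 \in [set: rat])
   phi e2 * psi (e1 - e2) * chi (e - e1)).
  apply: eq_fsbigr => e2 _.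
  rewrite (fsumMr (phi e2) (fun e1 => psi e1 * chi (e - e2 - e1))).
  rewrite (reindex_fsbigT (fun x => x - e2)); last first.
    by exists (fun x => x + e2) => x; rewrite ?subrK ?addrK.
  apply: eq_fsbigr => e1 _; rewrite mulrA; congr (_ * chi _); ring.
transitivity (\sum_(e1 \in [set: rat]) \sum_(e2 \in [set: rat])
   phi e2 * psi (e1 - e2) * chi (e - e1)); last first.
  apply: eq_fsbigr => e1 _.
  by rewrite (fsumMl (chi (e - e1)) (fun e2 => phi e2 * psi (e1 - e2))).
apply: (@fsum_exchT (fun e2 e1 => phi e2 * psi (e1 - e2) * chi (e - e1))
   (win N1 (e - M3 - M2) M1) (win (N1 * N2) (e - M3) (M1 + M2))).
- exact: win_fin.
- by apply: win_fin; rewrite muln_gt0 N10.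
move=> e2 e1; rewrite !mulf_eq0 !negb_or => /andP [/andP [/H1 [o1 l1] /H2 [o2 l2]] /H3 [o3 l3]].
split; first by split; [lra | split].
split; first lra; split; first lra.
rewrite -(subrK e2 e1); apply: ongD; first by rewrite mulnC; apply: ongM.
exact: ongM.
Qed.


Lemma nat_ratE (e : rat) : (denq e == 1) && (0 <= numq e) -> e = (absz (numq e))%:R.
Proof.
move=> /andP [/eqP d n]; have h : e = (numq e)%:~R by rewrite numqE d mulr1.
by rewrite {1}h pmulrn abszE ger0_norm.
Qed.

Lemma nq_nat (n : nat) : numq (n%:R : rat) = n%:Z.
Proof. by rewrite pmulrn numq_int. Qed.

Lemma dq_nat (n : nat) : denq (n%:R : rat) = 1.
Proof. by rewrite pmulrn denq_int. Qed.

Lemma ps_of_poly_nat (a : {poly K}) (n : nat) : ps_of_poly a n%:R = a`_n.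
Proof. by rewrite /ps_of_poly nq_nat dq_nat eqxx /=. Qed.

Lemma ps_of_polyP (a : {poly K}) e : ps_of_poly a e != 0 ->
  exists n : nat, e = n%:R /\ a`_n != 0.
Proof.
rewrite /ps_of_poly; case: ifP => [h|]; last by rewrite eqxx.
by move=> an; exists (absz (numq e)); split=> //; apply: nat_ratE.
Qed.

Lemma ps_of_poly0 (a : {poly K}) e : (forall n : nat, e != n%:R) -> ps_of_poly a e = 0.
Proof.
move=> H; apply/eqP; apply: contraT => /ps_of_polyP [n [en _]].
by move: (H n); rewrite en eqxx.
Qed.

Definition ps_opp (phi : ps) : ps := fun e => - phi e.

Lemma puis_poly (a : {poly K}) : is_puiseux (ps_of_poly a).
Proof.
apply: (@puisI _ 1 (size a)%:R); split=> // e /ps_of_polyP [n [-> an]].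
split; first by rewrite /ong mulr1 rpred_nat.
rewrite ler_nat; apply: ltnW; apply: contraR an; rewrite -leqNgt => h.
by rewrite nth_default.
Qed.

Lemma puis0 : is_puiseux (ps0 K).
Proof. by apply: (@puisI _ 1 0); split=> // e; rewrite eqxx. Qed.

Lemma puis_add (phi psi : ps) : is_puiseux phi -> is_puiseux psi -> is_puiseux (ps_add phi psi).
Proof.
move=> /puisE [N1 [M1 [N10 H1]]] /puisE [N2 [M2 [N20 H2]]].
apply: (@puisI _ (N1 * N2) (Num.max M1 M2)); split; first by rewrite muln_gt0 N10.
move=> e; rewrite /ps_add.
have [p0|/H1 [o l]] := eqVneq (phi e) 0.
  rewrite p0 add0r => /H2 [o l]; split; first by rewrite mulnC; apply: ongM.
  by rewrite le_max l orbT.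
by move=> _; split; [apply: ongM | rewrite le_max l].
Qed.

Lemma puis_opp (phi : ps) : is_puiseux phi -> is_puiseux (ps_opp phi).
Proof.
move=> /puisE [N1 [M1 [N10 H1]]]; apply: (@puisI _ N1 M1); split=> // e.
by rewrite /ps_opp oppr_eq0 => /H1.
Qed.

Lemma puis_mul (phi psi : ps) : is_puiseux phi -> is_puiseux psi -> is_puiseux (ps_mul phi psi).
Proof.
move=> /puisE [N1 [M1 [N10 H1]]] /puisE [N2 [M2 [N20 H2]]].
apply: (@puisI _ (N1 * N2) (M1 + M2)); split; first by rewrite muln_gt0 N10.
move=> e /fsum_nz [x [_]]; rewrite mulf_eq0 negb_or => /andP [/H1 [o1 l1] /H2 [o2 l2]].
split; last by lra.
rewrite -(subrK x e) addrC; apply: ongD; first exact: ongM.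
by rewrite mulnC; apply: ongM.
Qed.

Lemma ps1_0 : ps1 K 0 = 1.
Proof. by rewrite /ps1; have := ps_of_poly_nat 1 0; rewrite mulr0n coef1 /= => ->. Qed.

Lemma ps_mul1 (phi : ps) : ps_mul (ps1 K) phi = phi.
Proof.
apply/funext => e; rewrite /ps_mul (fsumT_sub (W := [set 0]%classic)).
  by rewrite fsbig_set1 ps1_0 mul1r subr0.
move=> x; rewrite mulf_eq0 negb_or => /andP [/ps_of_polyP [n [-> h]] _].
by move: h; rewrite coef1; case: n => [|n] /=; rewrite ?mulr0n ?eqxx.
Qed.

Lemma ps_of_polyD (a b : {poly K}) : ps_of_poly (a + b) = ps_add (ps_of_poly a) (ps_of_poly b).
Proof.
apply/funext => e; rewrite /ps_add /ps_of_poly; case: ifP => _; last by rewrite addr0.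
by rewrite coefD.
Qed.

Lemma ps_of_polyN (a : {poly K}) : ps_of_poly (- a) = ps_opp (ps_of_poly a).
Proof.
apply/funext => e; rewrite /ps_opp /ps_of_poly; case: ifP => _; last by rewrite oppr0.
by rewrite coefN.
Qed.

Lemma ps_of_polyM (a b : {poly K}) : ps_of_poly (a * b) = ps_mul (ps_of_poly a) (ps_of_poly b).
Proof.
apply/funext => e; rewrite /ps_mul.
have [[n ->]|] := pselect (exists n : nat, e = n%:R); last first.
  move=> H; rewrite ps_of_poly0; last by move=> n; apply/eqP => en; apply: H; exists n.
  apply/esym/fsbig1 => x _; apply/eqP; apply: contraT.
  rewrite mulf_eq0 negb_or => /andP [/ps_of_polyP [i [xi _]] /ps_of_polyP [j [xj _]]].
  by case: H; exists (i + j)%N; rewrite natrD -xi -xj addrC subrK.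
rewrite ps_of_poly_nat coefM.
rewrite (fsumT_sub (W := [set` [seq (i%:R : rat) | i <- iota 0 n.+1]]%classic)).
  rewrite -fsbig_seq; last first.
    rewrite map_inj_uniq ?iota_uniq // => i j /eqP; rewrite eqr_nat => /eqP //.
  rewrite big_map -val_enum_ord big_map.
  rewrite big_enum /=; apply: eq_bigr => j _.
  by rewrite !ps_of_poly_nat -natrB ?ps_of_poly_nat // -ltnS.
move=> x; rewrite mulf_eq0 negb_or => /andP [/ps_of_polyP [i [xi _]] /ps_of_polyP [j [xj _]]].
have nij : n = (i + j)%N.
  by apply/eqP; rewrite -(eqr_nat rat) natrD -xi -xj addrC subrK.
suff : x \in [seq (i%:R : rat) | i <- iota 0 n.+1] by [].
by apply/mapP; exists i; rewrite // mem_iota /= add0n ltnS nij leq_addr.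
Qed.

End Conv.

Section PSring.
Variable K : fieldType.
Local Notation ps := (pseries K).

Definition PS := {phi : ps | `[< is_puiseux phi >]}.
HB.instance Definition _ := [isSub for (@sval ps (fun phi => `[< is_puiseux phi >]))].
HB.instance Definition _ := [Choice of PS by <:].

Lemma PSP (x : PS) : is_puiseux (val x). Proof. exact: asboolW (valP x). Qed.
Definition mkPS (phi : ps) (h : is_puiseux phi) : PS := exist _ phi (asboolT h).

Definition PS0 := mkPS (puis0 K).
Definition PSopp (x : PS) := mkPS (puis_opp (PSP x)).
Definition PSadd (x y : PS) := mkPS (puis_add (PSP x) (PSP y)).
Definition PS1 := mkPS (puis_poly (1 : {poly K})).
Definition PSmul (x y : PS) := mkPS (puis_mul (PSP x) (PSP y)).

Lemma PSaddA : associative PSadd.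
Proof. by move=> x y z; apply: val_inj; apply/funext => e /=; rewrite /ps_add addrA. Qed.
Lemma PSaddC : commutative PSadd.
Proof. by move=> x y; apply: val_inj; apply/funext => e /=; rewrite /ps_add addrC. Qed.
Lemma PSadd0 : left_id PS0 PSadd.
Proof. by move=> x; apply: val_inj; apply/funext => e /=; rewrite /ps_add add0r. Qed.
Lemma PSaddN : left_inverse PS0 PSopp PSadd.
Proof. by move=> x; apply: val_inj; apply/funext => e /=; rewrite /ps_add /ps_opp addNr. Qed.

HB.instance Definition _ := GRing.isZmodule.Build PS PSaddA PSaddC PSadd0 PSaddN.

Lemma PSmulA : associative PSmul.
Proof. by move=> x y z; apply: val_inj; apply: ps_mulA; apply: PSP. Qed.
Lemma PSmulC : commutative PSmul.
Proof. by move=> x y; apply: val_inj; apply: ps_mulC. Qed.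
Lemma PSmul1 : left_id PS1 PSmul.
Proof. by move=> x; apply: val_inj; apply: ps_mul1. Qed.
Lemma PSmulDl : left_distributive PSmul PSadd.
Proof.
move=> x y z; apply: val_inj.
change (ps_mul (ps_add (val x) (val y)) (val z) =
  ps_add (ps_mul (val x) (val z)) (ps_mul (val y) (val z))).
rewrite ps_mulC (ps_mulDr (PSP z) (PSP x) (PSP y)).
by congr ps_add; apply: ps_mulC.
Qed.
Lemma PS1_neq0 : PS1 != PS0.
Proof.
apply/eqP => /(congr1 (fun x : PS => val x 0)) /=.
by have := ps1_0 K; rewrite /ps1 => -> /eqP; rewrite oner_eq0.
Qed.

HB.instance Definition _ := GRing.Zmodule_isComNzRing.Build PS
  PSmulA PSmulC PSmul1 PSmulDl PS1_neq0.

Lemma valD (x y : PS) : val (x + y) = ps_add (val x) (val y). Proof. by []. Qed.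
Lemma valN (x : PS) : val (- x) = ps_opp (val x). Proof. by []. Qed.
Lemma valM (x y : PS) : val (x * y) = ps_mul (val x) (val y). Proof. by []. Qed.
Lemma val0 : val (0 : PS) = ps0 K. Proof. by []. Qed.
Lemma val1 : val (1 : PS) = ps1 K. Proof. by []. Qed.

Definition psC (a : {poly K}) : PS := mkPS (puis_poly a).

Lemma psC_zmod : zmod_morphism psC.
Proof.
by move=> a b; apply: val_inj; rewrite /= ps_of_polyD ps_of_polyN.
Qed.

Lemma psC_monoid : monoid_morphism psC.
Proof.
split; first by apply: val_inj.
by move=> a b; apply: val_inj; apply: ps_of_polyM.
Qed.

HB.instance Definition _ := GRing.isZmodMorphism.Build {poly K} PS psC psC_zmod.
HB.instance Definition _ := GRing.isMonoidMorphism.Build {poly K} PS psC psC_monoid.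

End PSring.

Section Deg.
Variable K : fieldType.
Local Notation ps := (pseries K).

Definition ps_le (f : ps) (M : rat) := forall e, f e != 0 -> e <= M.

Lemma deg_le (f : ps) d M : ps_deg_is f d -> ps_le f M -> d <= M.
Proof. by move=> [h _] H; apply: H. Qed.

Lemma deg_ps_le (f : ps) d : ps_deg_is f d -> ps_le f d.
Proof. by move=> [_ h]. Qed.

Lemma ps_le_add (f g : ps) M : ps_le f M -> ps_le g M -> ps_le (ps_add f g) M.
Proof.
move=> hf hg e; rewrite /ps_add; have [f0|/hf //] := eqVneq (f e) 0.
by rewrite f0 add0r => /hg.
Qed.

Lemma ps_le_opp (f : ps) M : ps_le f M -> ps_le (ps_opp f) M.
Proof. by move=> hf e; rewrite /ps_opp oppr_eq0 => /hf. Qed.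

Lemma deg_uniq (f : ps) d1 d2 : ps_deg_is f d1 -> ps_deg_is f d2 -> d1 = d2.
Proof.
move=> [h1 H1] [h2 H2]; apply/eqP; rewrite eq_le; apply/andP; split.
  exact: H2. exact: H1.
Qed.

Lemma deg_mul (f g : ps) d1 d2 : ps_deg_is f d1 -> ps_deg_is g d2 ->
  ps_deg_is (ps_mul f g) (d1 + d2).
Proof.
move=> [f1 F1] [g1 G1]; split.
  rewrite /ps_mul (fsumT_sub (W := [set d1]%classic)).
    by rewrite fsbig_set1 addrC addKr mulf_neq0.
  move=> x; rewrite mulf_eq0 negb_or => /andP [/F1 l1 /G1 l2] /=.
  apply/eqP; rewrite eq_le l1 /=; lra.
move=> e /fsum_nz [x [_]]; rewrite mulf_eq0 negb_or => /andP [/F1 l1 /G1 l2].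
lra.
Qed.

Lemma deg_add_lt (f g : ps) d : ps_deg_is f d -> (forall e, g e != 0 -> e < d) ->
  ps_deg_is (ps_add f g) d.
Proof.
move=> [f1 F1] G; split.
  rewrite /ps_add; have [->|/G] := eqVneq (g d) 0; first by rewrite addr0.
  by rewrite ltxx.
by apply: ps_le_add => // e /G /ltW.
Qed.

Lemma deg_opp (f : ps) d : ps_deg_is f d -> ps_deg_is (ps_opp f) d.
Proof. by move=> [f1 F1]; split; [rewrite /ps_opp oppr_eq0 | apply: ps_le_opp]. Qed.

Lemma seq_max (s : seq rat) x0 : x0 \in s -> exists2 m, m \in s & forall x, x \in s -> x <= m.
Proof.
elim: s x0 => // a s IH x0 _.
case: s IH => [|b s] IH.
  by exists a => [|x]; rewrite ?inE ?mem_head // => /eqP ->.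
have [m ms H] := IH b (mem_head _ _).
have [am|ma] := lerP a m.
  exists m; first by rewrite inE ms orbT.
  by move=> x; rewrite inE => /orP [/eqP ->|/H].
exists a; first by rewrite mem_head.
move=> x; rewrite inE => /orP [/eqP ->//|/H xm]; exact: (le_trans xm (ltW ma)).
Qed.

End Deg.

Section Dom.
Variable K : fieldType.
Local Notation ps := (pseries K).

Lemma deg_exists (f : ps) : is_puiseux f -> f <> ps0 K -> exists d, ps_deg_is f d.
Proof.
move=> /puisE [N [M [N0 H]]] f0.
have [e0 fe0] : exists e0, f e0 != 0.
  have [//|H2] := pselect (exists e0, f e0 != 0).
  case: f0; apply/funext => e; apply/eqP; apply: contraT => fe; case: H2; exists e.
  by [].
set S := (win N e0 M `&` [set e | f e != 0])%classic.
have fS : finite_set S := sub_finite_set (@subIsetl _ _ _) (win_fin e0 M N0).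
have [s Ss] := (finite_seqP S).1 fS.
have Se0 : S e0 by have [o l] := H _ fe0; split => //; split => //.
have e0s : e0 \in s by move: Se0; rewrite Ss.
have [m ms Hm] := seq_max e0s.
have Sm : S m by rewrite Ss.
exists m; split; first by case: Sm.
move=> e fe; have [le0|lt] := lerP e0 e.
  apply: Hm; have [o l] := H _ fe.
  have Se : S e by split => //; split => //.
  by move: Se; rewrite Ss.
exact: le_trans (ltW lt) (Hm _ e0s).
Qed.

Lemma PS_val0 (x : PS K) : x != 0 -> val x <> ps0 K.
Proof. by move=> x0 h; move/eqP: x0; apply; apply: val_inj. Qed.

Lemma PS_deg (x : PS K) : x != 0 -> exists d, ps_deg_is (val x) d.
Proof. by move=> x0; apply: deg_exists (PSP x) (PS_val0 x0). Qed.

Lemma PS_mulf_neq0 (x y : PS K) : x != 0 -> y != 0 -> x * y != 0.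
Proof.
move=> /PS_deg [dx hx] /PS_deg [dy hy].
have [h _] := deg_mul hx hy.
by apply/eqP => E; move: h; rewrite -valM E /= eqxx.
Qed.

Definition Ev (Phi : PS K) (P : {poly {poly K}}) : PS K := (map_poly (@psC K) P).[Phi].

Lemma EvM Phi P Q : Ev Phi (P * Q) = Ev Phi P * Ev Phi Q.
Proof. by rewrite /Ev rmorphM hornerM. Qed.
Lemma EvD Phi P Q : Ev Phi (P + Q) = Ev Phi P + Ev Phi Q.
Proof. by rewrite /Ev rmorphD hornerD. Qed.
Lemma EvN Phi P : Ev Phi (- P) = - Ev Phi P.
Proof. by rewrite /Ev rmorphN hornerN. Qed.
Lemma EvC Phi c : Ev Phi c%:P = psC c.
Proof. by rewrite /Ev map_polyC hornerC. Qed.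
Lemma EvX Phi : Ev Phi 'X = Phi.
Proof. by rewrite /Ev map_polyX hornerX. Qed.

Lemma psC_inj : injective (@psC K).
Proof.
move=> a b /(congr1 val) /= hab; apply/polyP => n.
by have := congr1 (fun f => f n%:R) hab; rewrite /= !ps_of_poly_nat.
Qed.

Lemma val_exp (Phi : PS K) i : val (Phi ^+ i) = ps_pow (val Phi) i.
Proof. by elim: i => // i IH; rewrite exprS valM IH. Qed.

Lemma Ev_val P phi (h : is_puiseux phi) : val (Ev (mkPS h) P) = ps_eval P phi.
Proof.
rewrite /Ev horner_coef size_map_inj_poly ?rmorph0 //; last exact: psC_inj.
rewrite (big_morph val (@valD K) (@val0 K)) /ps_eval.
by apply: eq_bigr => i _; rewrite valM coef_map val_exp.
Qed.

End Dom.

Section Deg2.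
Variable K : fieldType.
Local Notation ps := (pseries K).

Lemma intr_natE (n : nat) : ((n%:Z)%:~R : rat) = n%:R.
Proof. by rewrite -pmulrn. Qed.

Lemma deg_psC (a : {poly K}) : a != 0 -> ps_deg_is (ps_of_poly a) (pdeg a)%:~R.
Proof.
move=> a0; rewrite /pdeg intr_natE; split.
  by rewrite ps_of_poly_nat -lead_coefE lead_coef_eq0.
move=> e /ps_of_polyP [n [-> an]]; rewrite ler_nat.
rewrite -ltnS prednK ?size_poly_gt0 //; apply: contraR an; rewrite -leqNgt => h.
by rewrite nth_default.
Qed.

Lemma pdegC (c : K) : c != 0 -> pdeg c%:P = 0.
Proof. by move=> c0; rewrite /pdeg size_polyC c0. Qed.

Lemma deg_Evy (Phi : PS K) d (hd : ps_deg_is (val Phi) d) (dpos : 0 < d)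
  (g : {poly K}) : g != 0 -> ps_deg_is (val (Ev Phi (g^:P))) ((pdeg g)%:~R * d).
Proof.
elim/poly_ind: g => [|g c IH]; first by rewrite eqxx.
move=> gnz; have [g0|g0] := eqVneq g 0.
  move: gnz; rewrite g0 mul0r add0r => c0.
  rewrite map_polyC EvC.
  have h := deg_psC c0.
  have c0' : c != 0 by rewrite -polyC_eq0.
  rewrite (pdegC c0') mulr0z mul0r; rewrite (pdegC c0') mulr0z in h; exact: h.
have hg := IH g0.
have szg : size (g * 'X + c%:P) = (size g).-1.+2.
  by rewrite size_MXaddC (negbTE g0) /= prednK // size_poly_gt0.
rewrite /pdeg szg /= -/(pdeg g).
have -> : ((((size g).-1.+1)%:Z)%:~R : rat) * d = (pdeg g)%:~R * d + d.
  by rewrite /pdeg !intr_natE mulrS mulrDl mul1r addrC.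
rewrite rmorphD rmorphM /= map_polyX map_polyC EvD EvM EvX EvC.
apply: (@deg_add_lt K (ps_mul (val (Ev Phi g^:P)) (val Phi)) (ps_of_poly c%:P)).
  exact: deg_mul hg hd.
move=> e /ps_of_polyP [n [-> cn]]; move: cn; rewrite coefC.
case: n => [|n]; rewrite ?eqxx //= => _.
have : (0 : rat) <= (pdeg g)%:~R by rewrite /pdeg intr_natE ler0n.
move=> h0; have := mulr_ge0 h0 (ltW dpos); lra.
Qed.

End Deg2.

Section Gauss.
Variable K : closedFieldType.
Local Notation P2 := {poly {poly K}}.

Lemma divXC (G : P2) (a : K) : map_poly (horner_eval a) G = 0 ->
  exists G', G = ('X - a%:P)%:P * G'.
Proof.
move=> H; exists (map_poly (fun q => q %/ ('X - a%:P)) G).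
apply/polyP => i; rewrite coefCM coef_map_id0 ?div0p //.
have : (map_poly (horner_eval a) G)`_i = 0 by rewrite H coef0.
rewrite coef_map /= horner_evalE => /eqP /factor_theorem [q ->].
by rewrite mulpK ?polyXsubC_eq0 // mulrC.
Qed.

Lemma core (d : {poly K}) (G H P : P2) : d != 0 -> d%:P * P = G * H ->
  exists e1 e2 G1 H1, [/\ G = e1%:P * G1, H = e2%:P * H1 & P = G1 * H1].
Proof.
have [n] := ubnP (size d); elim: n d G H P => // n IH d G H P szd d0 E.
have [s1|s1] := eqVneq (size d) 1.
  have dE : d = (d`_0)%:P by apply: size1_polyC; rewrite s1.
  have k0 : d`_0 != 0 by rewrite -polyC_eq0 -dE.
  exists d, 1, ((d`_0)^-1%:P%:P * G), H.
  split.
  - by rewrite mulrA -polyCM {1}dE -polyCM mulfV // !polyC1 mul1r.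
  - by rewrite polyC1 mul1r.
  have dP0 : d%:P != 0 :> P2 by rewrite polyC_eq0.
  apply: (mulfI dP0).
  by rewrite E !mulrA -polyCM {1}dE -polyCM mulfV // !polyC1 mul1r.
have [a ra] := closed_rootP d s1.
have [d' dE] := factor_theorem _ _ ra.
have d'0 : d' != 0 by apply: contraNneq d0 => h; rewrite dE h mul0r.
have szd' : (size d' < n)%N.
  have : size d = (size d').+1.
    by rewrite dE size_Mmonic ?monicXsubC // size_XsubC addn2.
  move: szd; rewrite ltnS => h1 h2; rewrite h2 in h1; exact: h1.
have Xa0 : ('X - a%:P : {poly K})%:P != 0 by rewrite polyC_eq0 polyXsubC_eq0.
pose ev := map_poly (horner_eval a).
have evd : ev d%:P = 0.
  by rewrite /ev map_polyC; apply/eqP; rewrite polyC_eq0; exact: ra.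
have evM : forall X Y, ev (X * Y) = ev X * ev Y by move=> X Y; rewrite /ev rmorphM.
have : ev G * ev H = 0 by rewrite -evM -E evM evd mul0r.
move/eqP; rewrite mulf_eq0 => /orP [/eqP /divXC [G' GE] | /eqP /divXC [H' HE]].
  have E' : d'%:P * P = G' * H.
    by apply: (mulfI Xa0); rewrite mulrA -polyCM (mulrC _ d') -dE E GE mulrA.
  have [e1 [e2 [G1 [H1 [G'E HE' PE]]]]] := IH d' G' H P szd' d'0 E'.
  exists (('X - a%:P) * e1), e2, G1, H1; split => //.
  by rewrite GE G'E mulrA -polyCM.
have E' : d'%:P * P = G * H'.
  by apply: (mulfI Xa0); rewrite mulrA -polyCM (mulrC _ d') -dE E HE mulrCA.
have [e1 [e2 [G1 [H1 [GE H'E PE]]]]] := IH d' G H' P szd' d'0 E'.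
exists e1, (('X - a%:P) * e2), G1, H1; split => //.
by rewrite HE H'E mulrA -polyCM.
Qed.



Lemma unitP2 (u : P2) : u \is a GRing.unit -> exists k : K, k != 0 /\ u = k%:P%:P.
Proof.
rewrite poly_unitE => /andP [s1 u0]; move: u0; rewrite poly_unitE => /andP [s2 u00].
exists (u`_0)`_0; split; first by rewrite unitfE in u00.
rewrite {1}(size1_polyC (eq_leq (eqP s1))).
by rewrite {1}(size1_polyC (eq_leq (eqP s2))).
Qed.

Lemma key (p c : P2) : irreducible2 p -> ~ (exists a, p = a%:P) -> ~ dvd2 p c ->
  c != 0 -> exists u v (dd : {poly K}), dd != 0 /\ u * p + v * c = dd%:P.
Proof.
move=> [p0 [pnu pirr]] hnx ndvd c0.
have [sc|sc] := leqP (size c) 1.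
  exists 0, 1, c`_0; split; last by rewrite mul0r add0r mul1r {1}(size1_polyC sc).
  by move: c0; rewrite {1}(size1_polyC sc) polyC_eq0.
have sp : (1 < size p)%N.
  rewrite ltnNge; apply/negP => h; apply: hnx; exists p`_0; exact: size1_polyC.
have [[u v] /= [_ _] E] := resultant_in_ideal sp sc.
exists u, v, (resultant p c); split; last by rewrite E.
apply/negP => /eqP r0.
have := resultant_eq0 p c; rewrite r0 eqxx => /esym sg.
have /Pdiv.Idomain.dvdpP [[k1 h1] /= k10 E1] := Pdiv.Idomain.dvdp_gcdl p c.
have /Pdiv.Idomain.dvdpP [[k2 h2] /= k20 E2] := Pdiv.Idomain.dvdp_gcdr p c.
rewrite -mul_polyC in E1; rewrite -mul_polyC in E2.
have [e1 [e2 [H1 [G1 [h1E gE PE]]]]] := core k10 E1.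
have [/unitP2 [kH [kH0 HE]]|/unitP2 [kG [kG0 GE]]] := pirr _ _ PE; last first.
  move: sg; rewrite gE GE -polyCM size_polyC.
  by case: (_ != 0).
have G1E : G1 = (kH^-1)%:P%:P * p.
  by rewrite PE HE mulrA -!polyCM mulVf // !polyC1 mul1r.
have E3 : k2%:P * c = (h2 * e2%:P * (kH^-1)%:P%:P) * p.
  by rewrite E2 gE G1E !mulrA.
have [f1 [f2 [W1 [p1 [WE pE cE]]]]] := core k20 E3.
have [/unitP2 [kf [kf0 fE]]|/unitP2 [kp [kp0 p1E]]] := pirr _ _ pE.
  apply: ndvd; exists (W1 * (kf^-1)%:P%:P).
  rewrite cE pE fE -mulrA; congr (W1 * _).
  by rewrite mulrA -!polyCM mulVf // !polyC1 mul1r.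
by apply: hnx; exists (f2 * kp%:P); rewrite pE p1E -polyCM.
Qed.

End Gauss.

Lemma frac_id1 (F : fieldType) (A' B C A Pp FD GD : F) : B != 0 -> C != 0 ->
  A' * C * FD * GD + A * Pp * B * FD * GD = B * C * FD * GD * (A' / B + A / C * Pp).
Proof.
move=> B0 C0.
rewrite (_ : B * C * FD * GD * (A' / B + A / C * Pp) =
   (B / B) * (A' * C * FD * GD) + (C / C) * (A * Pp * B * FD * GD)); last by ring.
by rewrite !divff // !mul1r.
Qed.

Lemma frac_id2 (F : fieldType) (B C FD GD FN GN : F) : FD != 0 -> GD != 0 ->
  B * C * FD * GD * (FN / FD - GN / GD) = (FN * GD - GN * FD) * B * C.
Proof.
move=> FD0 GD0.
rewrite (_ : B * C * FD * GD * (FN / FD - GN / GD) =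
   (FD / FD) * (FN * GD * B * C) - (GD / GD) * (GN * FD * B * C)); last by ring.
by rewrite !divff // !mul1r; ring.
Qed.

Lemma ring_id1 (R : comNzRingType) (S B C Fd Gd X : R) :
  S * B * C * Fd * Gd = X * B * C -> S * Fd * Gd * (B * C) = X * (B * C).
Proof.
move=> h; transitivity (S * B * C * Fd * Gd); first by ring.
by rewrite h; ring.
Qed.

Lemma ring_id2 (R : comNzRingType) (S Fd Gd Fn Gn : R) :
  S * Fd * Gd = Fn * Gd - Gn * Fd -> Gn * Fd = - (S * Fd * Gd) + Fn * Gd.
Proof. by move=> ->; ring. Qed.

Unset Implicit Arguments.

Theorem lemma1 (K : closedFieldType) (hchar : [pchar K] =i pred0)
  (p : {poly {poly K}}) (hirr : irreducible2 p)
  (hnx : ~ (exists a : {poly K}, p = a%:P))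
  (hny : ~ (exists b : {poly K}, p = b^:P))
  (r q : {fraction {poly {poly K}}})
  (hr : in_loc p r) (hrp : ~ in_ideal p r) (hq : in_loc p q)
  (fn fd gn gd : {poly K}) (hfd : fd != 0) (hgd : gd != 0)
  (heq : r + q * p%:F =
         (fn%:P)%:F / (fd%:P)%:F - (gn^:P)%:F / (gd^:P)%:F)
  (hinf : on_curve p 0 1 0 1)
  (phi : pseries K) (hphi : is_puiseux phi) (hroot : ps_eval p phi = ps0 K)
  (dphi : rat) (hdphi : ps_deg_is phi dphi) (hdpos : 0 < dphi)
  (b : rat) (hb : fn != 0 -> (m_inf fn fd)%:~R <= b)
  (s : pseries K) (hs : frac_eval_is r phi s) (dr : rat) (hdr : ps_deg_is s dr) :
  (b < dr -> gn != 0 /\ (m_inf gn gd)%:~R = dr / dphi) /\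
  (dr <= b -> gn != 0 -> (m_inf gn gd)%:~R <= b / dphi).
Proof.
have [spuis [a' [b' [hb' [rE hsb]]]]] := hs.
have [a [c [[c0 _] [ndvd qE]]]] := hq.
pose Phi := mkPS hphi.
pose S := mkPS spuis.
have b'0 : b' != 0.
  by apply: contra_notN hb' => /eqP ->; rewrite /ps_eval size_poly0 big_ord0.
have EB0 : Ev Phi b' != 0.
  by apply/eqP => h; apply: hb'; rewrite -(Ev_val b' hphi) -/Phi h.
have Ep : Ev Phi p = 0 by apply: val_inj; rewrite Ev_val hroot.
have ES : S * Ev Phi b' = Ev Phi a'.
  by apply: val_inj; rewrite (Ev_val a' hphi) -hsb -(Ev_val b' hphi).
have EC0 : Ev Phi c != 0.
  have [u [v [dd [dd0 E]]]] := key hirr hnx ndvd c0.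
  apply/eqP => hc; move: dd0; rewrite -(inj_eq (@psC_inj K)) rmorph0.
  by rewrite -(EvC Phi) -E EvD !EvM Ep hc !mulr0 addr0 eqxx.
have fdP0 : (fd%:P : {poly {poly K}}) != 0 by rewrite polyC_eq0.
have gdP0 : (gd^:P : {poly {poly K}}) != 0.
  by rewrite -size_poly_eq0 size_map_polyC size_poly_eq0.
have Epoly : a' * c * fd%:P * gd^:P + a * p * b' * fd%:P * gd^:P =
    (fn%:P * gd^:P - gn^:P * fd%:P) * b' * c.
  apply/eqP; rewrite -tofrac_eq; apply/eqP.
  move: heq; rewrite rE qE => heq'.
  have B0 : b'%:F != 0 by rewrite tofrac_eq0.
  have C0 : c%:F != 0 by rewrite tofrac_eq0.
  have FD0 : (fd%:P)%:F != 0 by rewrite tofrac_eq0.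
  have GD0 : (gd^:P)%:F != 0 by rewrite tofrac_eq0.
  rewrite !tofracD !tofracM !tofracB !tofracM.
  have e1 := @frac_id1 _ (a'%:F) (b'%:F) (c%:F) (a%:F) (p%:F) ((fd%:P)%:F) ((gd^:P)%:F) B0 C0.
  have e2 := @frac_id2 _ (b'%:F) (c%:F) ((fd%:P)%:F) ((gd^:P)%:F) ((fn%:P)%:F) ((gn^:P)%:F) FD0 GD0.
  by rewrite e1 heq'.
have Ev0 : Ev Phi 0 = 0 by rewrite /Ev rmorph0 horner0.
pose B' := Ev Phi b'; pose C := Ev Phi c; pose Fd := psC fd; pose Fn := psC fn.
pose Gd := Ev Phi (gd^:P); pose Gn := Ev Phi (gn^:P).
have EPS : S * Fd * Gd = Fn * Gd - Gn * Fd.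
  have h := congr1 (Ev Phi) Epoly.
  rewrite !(EvD, EvM, EvN, EvC) Ep -ES mulr0 !mul0r addr0 in h.
  have : (S * Fd * Gd - (Fn * Gd - Gn * Fd)) * (B' * C) = 0.
    rewrite mulrBl; apply/eqP; rewrite subr_eq0; apply/eqP.
    exact: ring_id1 h.
  move=> hX; have [/eqP|nz] := eqVneq (S * Fd * Gd - (Fn * Gd - Gn * Fd)) 0.
    by rewrite subr_eq0 => /eqP.
  by move: (PS_mulf_neq0 nz (PS_mulf_neq0 EB0 EC0)); rewrite hX eqxx.
have EQ2 : Gn * Fd = - (S * Fd * Gd) + Fn * Gd by apply: ring_id2.
have degPhi : ps_deg_is (val Phi) dphi := hdphi.
have degS : ps_deg_is (val S) dr := hdr.
have degFd : ps_deg_is (val Fd) (pdeg fd)%:~R := deg_psC hfd.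
have degGd := deg_Evy degPhi hdpos hgd.
have degA : ps_deg_is (val (S * Fd * Gd)) (dr + (pdeg fd)%:~R + (pdeg gd)%:~R * dphi).
  exact: deg_mul (deg_mul degS degFd) degGd.
have mfE : (m_inf fn fd)%:~R = (pdeg fn)%:~R - (pdeg fd)%:~R :> rat by rewrite /m_inf intrB.
have mgE : (m_inf gn gd)%:~R = (pdeg gn)%:~R - (pdeg gd)%:~R :> rat by rewrite /m_inf intrB.
have dphi0 : dphi != 0 by rewrite gt_eqF.
split.
  move=> lt_b.
  have gn0 : gn != 0.
    apply/negP => /eqP gn0.
    move: EQ2; rewrite /Gn gn0 rmorph0 Ev0 mul0r => /eqP; rewrite eq_sym addrC subr_eq0 => /eqP E3.
    have [fn0|fn0] := eqVneq fn 0.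
      move: degA => [+ _]; rewrite -E3 /Fn fn0 rmorph0 mul0r /=.
      by rewrite eqxx.
    have degFn : ps_deg_is (val Fn) (pdeg fn)%:~R := deg_psC fn0.
    have degA' := degA; rewrite -E3 in degA'.
    have := deg_uniq (deg_mul degFn degGd) degA'.
    move: (hb fn0); rewrite mfE; lra.
  split=> //.
  have degGn := deg_Evy degPhi hdpos gn0.
  have degB : ps_deg_is (val (Gn * Fd)) ((pdeg gn)%:~R * dphi + (pdeg fd)%:~R).
    exact: deg_mul degGn degFd.
  have degR : ps_deg_is (val (- (S * Fd * Gd) + Fn * Gd))
      (dr + (pdeg fd)%:~R + (pdeg gd)%:~R * dphi).
    have [fn0|fn0] := eqVneq fn 0.
      rewrite /Fn fn0 rmorph0 mul0r addr0; exact: deg_opp degA.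
    have degFn : ps_deg_is (val Fn) (pdeg fn)%:~R := deg_psC fn0.
    apply: (@deg_add_lt K (ps_opp (val (S * Fd * Gd))) (val (Fn * Gd))).
      exact: deg_opp degA.
    move=> e /(deg_ps_le (deg_mul degFn degGd)).
    move: (hb fn0); rewrite mfE; lra.
  rewrite -EQ2 in degR.
  have := deg_uniq degB degR => E4.
  rewrite mgE; apply: (mulIf dphi0); rewrite divfK // mulrBl; lra.
move=> le_b gn0.
have degGn := deg_Evy degPhi hdpos gn0.
have degB : ps_deg_is (val (Gn * Fd)) ((pdeg gn)%:~R * dphi + (pdeg fd)%:~R).
  exact: deg_mul degGn degFd.
have leR : ps_le (val (- (S * Fd * Gd) + Fn * Gd))
    (b + (pdeg fd)%:~R + (pdeg gd)%:~R * dphi).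
  apply: ps_le_add.
    apply: ps_le_opp => e /(deg_ps_le degA); lra.
  have [fn0|fn0] := eqVneq fn 0.
    by rewrite /Fn fn0 rmorph0 mul0r => e; rewrite eqxx.
  have degFn : ps_deg_is (val Fn) (pdeg fn)%:~R := deg_psC fn0.
  move=> e /(deg_ps_le (deg_mul degFn degGd)).
  move: (hb fn0); rewrite mfE; lra.
rewrite -EQ2 in leR.
have := deg_le degB leR => E4.
rewrite mgE ler_pdivlMr // mulrBl; lra.
Qed.
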